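(* For $j,k\in\mathbb{N}$ let $$R_{jk}=2^{3/2}\int_0^1\sin\Big(\frac{\pi x}{2}\Big)^{1/2}\sin(j\pi x)\sin(k\pi x)\,\mathrm{d}x,\qquad S_{jk}=\int_0^1\sin\Big(\frac{\pi x}{2}\Big)^{-1}\sin(j\pi x)\sin(k\pi x)\,\mathrm{d}x.$$ Let $n\in\mathbb{N}\setminus\{1\}$ and $j,k\in\{1,\dots,n\}$. Then: (i) $R_{jj}>0$, $R_{jk}<0$ if $j\ne k$, and $|R_{jk}|\le2\sqrt2$; (ii) $R_{n,n-1}$ is a decreasing function of $n\in\mathbb{N}\setminus\{1\}$; (iii) $2\sum_{k=1}^{n-1}R_{kn}\ge-R_{nn}$; (iv) $S_{jk}>\frac1\pi\log\Big(\frac{j+k+\frac12}{|j-k|+\frac12}\Big)>0$; (v) $S_{jk}<\frac1\pi\log\Big(\frac{j+k-\frac12}{|j-k|-\frac12}\Big)$ for $j\ne k$, and $S_{jj}<\frac2\pi+\frac1\pi\log(4j-1)$; (vi) $S_{jn}$ is an increasing function of $j$ for $1\le j\le n$. *)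

(* Defs.v *)
From Stdlib Require Import Reals Lra Lia.
From Coquelicot Require Import Coquelicot.
Open Scope R_scope.

Definition Rjk (j k : nat) : R :=
  Rpower 2 (3/2) *
  RInt (fun x => sqrt (sin (PI * x / 2)) * sin (INR j * PI * x) * sin (INR k * PI * x)) 0 1.

Definition Sjk (j k : nat) : R :=
  RInt (fun x => / sin (PI * x / 2) * sin (INR j * PI * x) * sin (INR k * PI * x)) 0 1.

(* Main.v *)
Require Import Defs.
From Stdlib Require Import Reals Lra Lia.
From Coquelicot Require Import Coquelicot.
Open Scope R_scope.

Fixpoint gs (f : nat -> R) (a L : nat) : R :=
  match L with O => 0 | S L' => gs f a L' + f (a + L')%nat end.

Lemma gs_front f a L : gs f a (S L) = f a + gs f (S a) L.
Proof.
  induction L as [|L IH].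
  - simpl. rewrite Nat.add_0_r. ring.
  - change (gs f a (S (S L))) with (gs f a (S L) + f (a + S L)%nat).
    rewrite IH. simpl. replace (a + S L)%nat with (S (a + L)) by lia. ring.
Qed.

Lemma sin_INR_PI n : sin (INR n * PI) = 0.
Proof.
  induction n as [|n IH].
  - simpl. rewrite Rmult_0_l. apply sin_0.
  - rewrite S_INR. replace ((INR n + 1) * PI) with (INR n * PI + PI) by ring.
    rewrite sin_plus, IH, sin_PI. ring.
Qed.

Lemma cos_half n : cos ((INR n + 1/2) * PI) = 0.
Proof.
  replace ((INR n + 1/2) * PI) with (INR n * PI + PI/2) by field.
  rewrite cos_plus, sin_INR_PI, cos_PI2. ring.
Qed.

Lemma cR_mult (f g : R -> R) x : continuous f x -> continuous g x -> continuous (fun y => f y * g y) x.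
Proof. intros Hf Hg. exact (@continuous_mult R_UniformSpace R_AbsRing f g x Hf Hg). Qed.
Lemma cR_plus (f g : R -> R) x : continuous f x -> continuous g x -> continuous (fun y => f y + g y) x.
Proof. intros Hf Hg. exact (@continuous_plus R_UniformSpace R_AbsRing R_NormedModule f g x Hf Hg). Qed.

Lemma is_RInt_sin_half m :
  is_RInt (fun x => sin ((INR m + 1/2) * PI * x)) 0 1 (/ (PI * (INR m + 1/2))).
Proof.
  set (c := (INR m + 1/2) * PI).
  assert (Hc : 0 < c).
  { unfold c. apply Rmult_lt_0_compat. pose proof (pos_INR m). lra. apply PI_RGT_0. }
  assert (H := is_RInt_derive (fun x => - cos (c * x) / c) (fun x => sin (c * x)) 0 1).
  replace (/ (PI * (INR m + 1 / 2))) with (minus (- cos (c * 1) / c) (- cos (c * 0) / c)).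
  apply H.
  - intros x _. auto_derive; auto. field. lra.
  - intros x _. apply continuous_sin_comp. apply cR_mult. apply continuous_const. apply continuous_id.
  - unfold minus, plus, opp; simpl. rewrite Rmult_1_r, Rmult_0_r, cos_0.
    unfold c. rewrite cos_half. fold c. unfold c. field. pose proof PI_RGT_0. pose proof (pos_INR m). split; lra.
Qed.

Lemma prod_sin j k d x : INR d = Rabs (INR j - INR k) ->
  sin (INR j * PI * x) * sin (INR k * PI * x) =
  (cos (INR d * PI * x) - cos (INR (j + k) * PI * x)) / 2.
Proof.
  intros Hd.
  assert (Hc : cos (INR d * PI * x) = cos (INR j * PI * x - INR k * PI * x)).
  { rewrite Hd. unfold Rabs. destruct (Rcase_abs (INR j - INR k)).
    - rewrite <- cos_neg. f_equal. ring.
    - f_equal. ring. }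
  rewrite Hc, plus_INR.
  replace ((INR j + INR k) * PI * x) with (INR j * PI * x + INR k * PI * x) by ring.
  rewrite cos_minus, cos_plus. field.
Qed.

Lemma telesc d L x :
  (cos (INR d * PI * x) - cos (INR (d + L) * PI * x)) / 2 =
  sin (PI * x / 2) * gs (fun m => sin ((INR m + 1/2) * PI * x)) d L.
Proof.
  induction L as [|L IH].
  - simpl. rewrite Nat.add_0_r. field.
  - simpl gs. rewrite Rmult_plus_distr_l, <- IH.
    set (w := (INR (d + L) + 1/2) * PI * x).
    replace (INR (d + L) * PI * x) with (w - PI * x / 2)
      by (unfold w; field).
    replace (INR (d + S L) * PI * x) with (w + PI * x / 2)
      by (unfold w; rewrite Nat.add_succ_r, S_INR; field).
    rewrite cos_minus, cos_plus. field.
Qed.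

Lemma is_RInt_gs d L :
  is_RInt (fun x => gs (fun m => sin ((INR m + 1/2) * PI * x)) d L) 0 1
    (gs (fun m => / (PI * (INR m + 1/2))) d L).
Proof.
  induction L as [|L IH].
  - simpl. pose proof (is_RInt_const (V:=R_NormedModule) 0 1 0) as H.
    match type of H with is_RInt _ _ _ ?v => replace v with 0 in H end. exact H.
    unfold scal; simpl; unfold mult; simpl. ring.
  - simpl. apply (is_RInt_plus (V := R_NormedModule)); [exact IH | apply is_RInt_sin_half].
Qed.

Lemma Sjk_eq j k d L : INR d = Rabs (INR j - INR k) -> (d + L = j + k)%nat ->
  Sjk j k = gs (fun m => / (PI * (INR m + 1/2))) d L.
Proof.
  intros Hd HL. unfold Sjk. apply is_RInt_unique.
  eapply is_RInt_ext; [| apply is_RInt_gs].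
  intros x Hx. rewrite Rmin_left in Hx by lra. rewrite Rmax_right in Hx by lra.
  assert (Hs : 0 < sin (PI * x / 2)).
  { pose proof PI_RGT_0. apply sin_gt_0; nra. }
  symmetry. rewrite Rmult_assoc, (prod_sin j k d x Hd), <- HL, telesc. rewrite <- Rmult_assoc, Rinv_l, Rmult_1_l. reflexivity. lra.
Qed.

Definition B (m : nat) : R := / (INR m + 1/2).

Lemma gs_scal c f d L : gs (fun m => c * f m) d L = c * gs f d L.
Proof. induction L as [|L IH]; simpl; [ring | rewrite IH; ring]. Qed.

Lemma gs_ext f g d L : (forall m, f m = g m) -> gs f d L = gs g d L.
Proof. intros H. induction L as [|L IH]; simpl; [reflexivity | rewrite IH, H; reflexivity]. Qed.

Lemma Sjk_eqB j k d L : INR d = Rabs (INR j - INR k) -> (d + L = j + k)%nat ->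
  Sjk j k = / PI * gs B d L.
Proof.
  intros Hd HL. rewrite (Sjk_eq j k d L Hd HL), <- gs_scal. apply gs_ext.
  intros m. unfold B. pose proof PI_RGT_0. pose proof (pos_INR m).
  rewrite Rinv_mult. reflexivity.
Qed.

Lemma ln_upper a b : 0 < a < b -> ln (b / a) < (b - a) / a.
Proof.
  intros [Ha Hab]. assert (Hba : 0 < b / a) by (apply Rdiv_lt_0_compat; lra).
  assert (Hy : ln (b / a) <> 0).
  { intros E. assert (exp (ln (b/a)) = b / a) by (apply exp_ln; auto).
    rewrite E, exp_0 in H. apply (f_equal (fun t => t * a)) in H.
    field_simplify in H; lra. }
  pose proof (exp_ineq1 _ Hy). rewrite exp_ln in H by auto.
  replace ((b - a) / a) with (b / a - 1) by (field; lra). lra.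
Qed.

Lemma ln_lower a b : 0 < a < b -> (b - a) / b < ln (b / a).
Proof.
  intros [Ha Hab]. assert (Hba : 0 < a / b) by (apply Rdiv_lt_0_compat; lra).
  assert (Hy : ln (a / b) <> 0).
  { intros E. assert (exp (ln (a/b)) = a / b) by (apply exp_ln; auto).
    rewrite E, exp_0 in H. apply (f_equal (fun t => t * b)) in H.
    field_simplify in H; lra. }
  pose proof (exp_ineq1 _ Hy). rewrite exp_ln in H by auto.
  rewrite ln_div in * by lra.
  replace ((b - a) / b) with (1 - a / b) by (field; lra). lra.
Qed.

Lemma B_lower m : ln (INR m + 3/2) - ln (INR m + 1/2) < B m.
Proof.
  pose proof (pos_INR m). unfold B.
  rewrite <- ln_div by lra.
  pose proof (ln_upper (INR m + 1/2) (INR m + 3/2) ltac:(lra)).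
  replace (/ (INR m + 1/2)) with ((INR m + 3 / 2 - (INR m + 1 / 2)) / (INR m + 1 / 2)) by (field; lra).
  exact H0.
Qed.

Lemma B_upper m : (1 <= m)%nat -> B m < ln (INR m + 1/2) - ln (INR m - 1/2).
Proof.
  intros Hm. apply le_INR in Hm. simpl in Hm. unfold B.
  rewrite <- ln_div by lra.
  pose proof (ln_lower (INR m - 1/2) (INR m + 1/2) ltac:(lra)).
  replace (/ (INR m + 1/2)) with ((INR m + 1 / 2 - (INR m - 1 / 2)) / (INR m + 1 / 2)) by (field; lra).
  exact H.
Qed.

Lemma gs_lower_le d L : ln (INR (d + L) + 1/2) - ln (INR d + 1/2) <= gs B d L.
Proof.
  induction L as [|L IH].
  - simpl. rewrite Nat.add_0_r. lra.
  - simpl gs. pose proof (B_lower (d + L)).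
    rewrite Nat.add_succ_r, S_INR.
    replace (INR (d + L) + 1 + 1/2) with (INR (d + L) + 3/2) by lra. lra.
Qed.

Lemma gs_lower_lt d L : ln (INR (d + S L) + 1/2) - ln (INR d + 1/2) < gs B d (S L).
Proof.
  simpl gs. pose proof (B_lower (d + L)). pose proof (gs_lower_le d L).
  rewrite Nat.add_succ_r, S_INR.
  replace (INR (d + L) + 1 + 1/2) with (INR (d + L) + 3/2) by lra. lra.
Qed.

Lemma gs_upper_le d L : (1 <= d)%nat -> gs B d L <= ln (INR (d + L) - 1/2) - ln (INR d - 1/2).
Proof.
  intros Hd. induction L as [|L IH].
  - simpl. rewrite Nat.add_0_r. lra.
  - simpl gs. pose proof (B_upper (d + L) ltac:(lia)).
    rewrite Nat.add_succ_r, S_INR.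
    replace (INR (d + L) + 1 - 1/2) with (INR (d + L) + 1/2) by lra. lra.
Qed.

Lemma gs_upper_lt d L : (1 <= d)%nat -> gs B d (S L) < ln (INR (d + S L) - 1/2) - ln (INR d - 1/2).
Proof.
  intros Hd. simpl gs. pose proof (B_upper (d + L) ltac:(lia)). pose proof (gs_upper_le d L Hd).
  rewrite Nat.add_succ_r, S_INR.
  replace (INR (d + L) + 1 - 1/2) with (INR (d + L) + 1/2) by lra. lra.
Qed.

Definition dist (j k : nat) : nat := if Nat.leb k j then (j - k)%nat else (k - j)%nat.

Lemma dist_INR j k : INR (dist j k) = Rabs (INR j - INR k).
Proof.
  unfold dist. destruct (Nat.leb k j) eqn:E.
  - apply Nat.leb_le in E. rewrite minus_INR by auto. apply le_INR in E.
    rewrite Rabs_right; lra.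
  - apply Nat.leb_gt in E. rewrite minus_INR by lia. apply lt_INR in E.
    rewrite Rabs_left; lra.
Qed.

Lemma dist_le j k : (dist j k <= j + k)%nat.
Proof. unfold dist. destruct (Nat.leb k j); lia. Qed.

Lemma dist_lt j k : (1 <= j)%nat -> (1 <= k)%nat -> (dist j k < j + k)%nat.
Proof. unfold dist. destruct (Nat.leb k j); lia. Qed.

Lemma dist_pos j k : j <> k -> (1 <= dist j k)%nat.
Proof. unfold dist. destruct (Nat.leb k j) eqn:E; [apply Nat.leb_le in E | apply Nat.leb_gt in E]; lia. Qed.

Lemma S_iv j k : (1 <= j)%nat -> (1 <= k)%nat ->
  / PI * ln ((INR j + INR k + 1/2) / (Rabs (INR j - INR k) + 1/2)) < Sjk j k /\
  0 < / PI * ln ((INR j + INR k + 1/2) / (Rabs (INR j - INR k) + 1/2)).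
Proof.
  intros Hj Hk. pose proof (dist_lt j k Hj Hk) as Hlt.
  set (d := dist j k) in *. set (L' := (j + k - d - 1)%nat).
  assert (HL : (d + S L' = j + k)%nat) by (unfold L'; lia).
  rewrite (Sjk_eqB j k d (S L') (dist_INR j k) HL).
  rewrite <- (dist_INR j k). fold d.
  assert (E : INR j + INR k = INR (d + S L')) by (rewrite HL, plus_INR; reflexivity).
  rewrite E. pose proof (pos_INR d). pose proof (pos_INR (d + S L')).
  pose proof PI_RGT_0. assert (0 < / PI) by (apply Rinv_0_lt_compat; lra).
  rewrite ln_div by lra. split.
  - apply Rmult_lt_compat_l; auto. apply gs_lower_lt.
  - apply Rmult_lt_0_compat; auto.
    assert (INR d < INR (d + S L')) by (apply lt_INR; lia).
    pose proof (ln_increasing (INR d + 1/2) (INR (d + S L') + 1/2) ltac:(lra) ltac:(lra)). lra.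
Qed.

Lemma S_v1 j k : (1 <= j)%nat -> (1 <= k)%nat -> j <> k ->
  Sjk j k < / PI * ln ((INR j + INR k - 1/2) / (Rabs (INR j - INR k) - 1/2)).
Proof.
  intros Hj Hk Hne. pose proof (dist_lt j k Hj Hk) as Hlt. pose proof (dist_pos j k Hne) as Hd1.
  set (d := dist j k) in *. set (L' := (j + k - d - 1)%nat).
  assert (HL : (d + S L' = j + k)%nat) by (unfold L'; lia).
  rewrite (Sjk_eqB j k d (S L') (dist_INR j k) HL).
  rewrite <- (dist_INR j k). fold d.
  assert (E : INR j + INR k = INR (d + S L')) by (rewrite HL, plus_INR; reflexivity).
  rewrite E. pose proof (le_INR _ _ Hd1). simpl in H.
  assert (INR d < INR (d + S L')) by (apply lt_INR; lia).
  pose proof PI_RGT_0. assert (0 < / PI) by (apply Rinv_0_lt_compat; lra).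
  rewrite ln_div by lra.
  apply Rmult_lt_compat_l; auto. apply gs_upper_lt; auto.
Qed.

Lemma S_v2 j : (1 <= j)%nat -> Sjk j j < 2 / PI + / PI * ln (4 * INR j - 1).
Proof.
  intros Hj. set (m := (2 * j - 2)%nat).
  assert (HL : (0 + S (S m) = j + j)%nat) by (unfold m; lia).
  assert (Hd : INR 0 = Rabs (INR j - INR j)) by (rewrite Rminus_diag, Rabs_R0; reflexivity).
  rewrite (Sjk_eqB j j 0 (S (S m)) Hd HL).
  rewrite gs_front. unfold B at 1. simpl INR.
  pose proof (gs_upper_lt 1 m (le_n 1)).
  assert (E : INR (1 + S m) = 2 * INR j) by
      (replace (1 + S m)%nat with (j + j)%nat by (unfold m; lia); rewrite plus_INR; ring).
  rewrite E in H. simpl INR in H.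
  pose proof (le_INR _ _ Hj). simpl in H0.
  replace (ln (4 * INR j - 1)) with (ln (2 * INR j - 1/2) - ln (1 - 1/2)).
  2:{ rewrite <- ln_div by lra. f_equal. field. }
  pose proof PI_RGT_0. assert (0 < / PI) by (apply Rinv_0_lt_compat; lra).
  replace (/ (0 + 1/2)) with 2 by field.
  replace (2 / PI) with (/ PI * 2) by (unfold Rdiv; ring).
  rewrite <- Rmult_plus_distr_l.
  apply Rmult_lt_compat_l; auto. lra.
Qed.

Lemma S_vi n j : (1 <= j)%nat -> (j < n)%nat -> Sjk j n < Sjk (S j) n.
Proof.
  intros Hj Hn. set (d := (n - S j)%nat).
  assert (H1 : INR (S d) = Rabs (INR j - INR n)).
  { rewrite <- dist_INR. f_equal. unfold dist, d. destruct (Nat.leb n j) eqn:E;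
    [apply Nat.leb_le in E | apply Nat.leb_gt in E]; lia. }
  assert (H2 : INR d = Rabs (INR (S j) - INR n)).
  { rewrite <- dist_INR. f_equal. unfold dist, d. destruct (Nat.leb n (S j)) eqn:E;
    [apply Nat.leb_le in E | apply Nat.leb_gt in E]; lia. }
  rewrite (Sjk_eqB j n (S d) (2 * j) H1) by (unfold d; lia).
  rewrite (Sjk_eqB (S j) n d (S (S (2 * j))) H2) by (unfold d; lia).
  change (gs B d (S (S (2 * j)))) with (gs B d (S (2 * j)) + B (d + S (2 * j))%nat). rewrite gs_front.
  pose proof PI_RGT_0. assert (0 < / PI) by (apply Rinv_0_lt_compat; lra).
  apply Rmult_lt_compat_l; auto.
  unfold B. pose proof (pos_INR d). pose proof (pos_INR (d + S (2 * j))).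
  assert (0 < / (INR d + 1/2)) by (apply Rinv_0_lt_compat; lra).
  assert (0 < / (INR (d + S (2 * j)) + 1/2)) by (apply Rinv_0_lt_compat; lra).
  lra.
Qed.

Definition hh (x : R) : R := sqrt (sin (PI * x / 2)).
Definition Ic (m : nat) : R := RInt (fun x => hh x * cos (INR m * PI * x)) 0 1.

Lemma hh_cont x : continuous hh x.
Proof.
  unfold hh. apply continuous_sqrt_comp. apply continuous_sin_comp.
  assert (E : forall y, PI / 2 * y = PI * y / 2) by (intros; field).
  apply (continuous_ext (fun y => PI / 2 * y)). intros; apply E.
  apply cR_mult. apply continuous_const. apply continuous_id.
Qed.

Lemma cos_cont (c : R) x : continuous (fun y => cos (c * y)) x.
Proof.
  apply continuous_cos_comp. apply cR_mult. apply continuous_const. apply continuous_id.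
Qed.

Lemma f_cont m x : continuous (fun y => hh y * cos (INR m * PI * y)) x.
Proof. apply cR_mult. apply hh_cont. apply (cos_cont (INR m * PI)). Qed.

Lemma ex_I m : ex_RInt (fun x => hh x * cos (INR m * PI * x)) 0 1.
Proof. apply (ex_RInt_continuous (V := R_CompleteNormedModule)). intros; apply f_cont. Qed.

Lemma abs_sin_le u : Rabs (sin u) <= Rabs u.
Proof.
  assert (Hp : forall v, 0 <= v -> Rabs (sin v) <= v).
  { intros v Hv. destruct (Rle_lt_dec 1 v).
    - pose proof (SIN_bound v). unfold Rabs; destruct (Rcase_abs (sin v)); lra.
    - destruct (Req_dec v 0) as [->|Hne]. rewrite sin_0, Rabs_R0. lra.
      pose proof PI_RGT_0. pose proof PI2_1. pose proof (sin_lt_x v ltac:(lra)).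
      assert (0 < sin v) by (apply sin_gt_0; lra).
      rewrite Rabs_right; lra. }
  destruct (Rle_lt_dec 0 u).
  - rewrite (Rabs_right u) by lra. auto.
  - rewrite <- (Ropp_involutive u), sin_neg, Rabs_Ropp, Rabs_Ropp. rewrite (Rabs_right (- u)) by lra. apply Hp. lra.
Qed.

Definition GG (x : R) : R := sin (PI * x / 2) * hh x.

Lemma GG_deriv0 : is_derive GG 0 0.
Proof.
  apply is_derive_Reals. intros eps Heps.
  pose proof PI_RGT_0 as Hpi. pose proof PI_4 as Hpi4.
  assert (Hd : 0 < eps * eps / (PI * PI * PI)).
  { apply Rdiv_lt_0_compat; [nra | ]. apply Rmult_lt_0_compat; nra. }
  exists (mkposreal _ Hd). intros h Hh Hlt. simpl in Hlt.
  unfold GG, hh. rewrite Rplus_0_l, Rmult_0_r, Rdiv_0_l, sin_0, sqrt_0, Rmult_0_l, Rminus_0_r, Rminus_0_r.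
  set (u := PI * h / 2).
  assert (Hu : Rabs u = PI / 2 * Rabs h).
  { unfold u. unfold Rdiv. rewrite !Rabs_mult, (Rabs_right PI) by lra.
    rewrite (Rabs_right (/2)) by lra. ring. }
  assert (Hh0 : 0 < Rabs h) by (apply Rabs_pos_lt; auto).
  pose proof (abs_sin_le u) as Hs.
  assert (Hsq : sqrt (sin u) <= sqrt (Rabs u)).
  { apply sqrt_le_1_alt. pose proof (Rle_abs (sin u)). lra. }
  assert (Hsq2 : sqrt (Rabs u) < 2 * eps / PI).
  { rewrite <- (sqrt_pow2 (2 * eps / PI)).
    2:{ apply Rlt_le, Rdiv_lt_0_compat; lra. }
    apply sqrt_lt_1_alt. split. apply Rabs_pos.
    rewrite Hu.
    apply Rlt_le_trans with (PI / 2 * (eps * eps / (PI * PI * PI))).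
    apply Rmult_lt_compat_l; lra.
    replace (PI / 2 * (eps * eps / (PI * PI * PI))) with (eps * eps / (2 * PI * PI)) by (field; lra).
    replace ((2 * eps / PI) ^ 2) with (4 * (eps * eps) / (PI * PI)) by (field; lra).
    unfold Rdiv. apply Rmult_le_compat; try nra.
    apply Rlt_le, Rinv_0_lt_compat; nra.
    apply Rinv_le_contravar; nra. }
  unfold Rdiv. rewrite Rabs_mult, Rabs_mult, Rabs_Rinv by auto.
  rewrite (Rabs_right (sqrt (sin u))) by (apply Rle_ge, sqrt_pos).
  pose proof (sqrt_pos (sin u)).
  apply Rle_lt_trans with (Rabs u * sqrt (sin u) * / Rabs h).
  { apply Rmult_le_compat_r. apply Rlt_le, Rinv_0_lt_compat; auto.
    apply Rmult_le_compat_r; auto. }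
  rewrite Hu. replace (PI / 2 * Rabs h * sqrt (sin u) * / Rabs h) with (PI / 2 * sqrt (sin u)) by (field; lra).
  apply Rle_lt_trans with (PI / 2 * sqrt (Rabs u)). apply Rmult_le_compat_l; lra.
  apply Rlt_le_trans with (PI / 2 * (2 * eps / PI)). apply Rmult_lt_compat_l; lra.
  right. field. lra.
Qed.

Lemma GG_deriv x : 0 <= x <= 1 -> is_derive GG x (3/2 * (PI/2) * cos (PI * x / 2) * hh x).
Proof.
  intros Hx. destruct (Req_dec x 0) as [->|Hne].
  - unfold hh. rewrite Rmult_0_r, Rdiv_0_l, sin_0, sqrt_0, Rmult_0_r. apply GG_deriv0.
  - assert (Hs : 0 < sin (PI * x / 2)).
    { pose proof PI_RGT_0. apply sin_gt_0; nra. }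
    unfold GG, hh. auto_derive. auto. unfold Rdiv in *.
    set (s := sin (PI * x * / 2)) in *. set (q := sqrt s).
    assert (Hq : q * q = s) by (apply sqrt_sqrt; lra).
    assert (Hq0 : 0 < q) by (apply sqrt_lt_R0; lra).
    rewrite <- Hq at 1. field. lra.
Qed.

Lemma Irec p : (INR p + 5/4) * Ic (S p) = (INR p - 1/4) * Ic p.
Proof.
  set (w := (INR p + 1/2) * PI).
  set (F := fun x => GG x * cos (w * x)).
  set (DF := fun x => PI / 2 * ((INR p + 5/4) * (hh x * cos (INR (S p) * PI * x))
                             + (1/4 - INR p) * (hh x * cos (INR p * PI * x)))).
  assert (Hder : forall x, Rmin 0 1 <= x <= Rmax 0 1 -> is_derive F x (DF x)).
  { intros x Hx. rewrite Rmin_left, Rmax_right in Hx by lra.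
    pose proof (GG_deriv x Hx) as HG.
    assert (HC : is_derive (fun y => cos (w * y)) x (- w * sin (w * x))).
    { auto_derive; auto. ring. }
    pose proof (is_derive_mult GG (fun y => cos (w * y)) x _ _ HG HC) as H.
    match type of H with _ -> is_derive _ _ ?v => replace (DF x) with v end.
    apply H. intros; apply Rmult_comm.
    unfold DF, GG. rewrite S_INR. unfold plus, mult; simpl.
    idtac.
    replace ((INR p + 1) * PI * x) with (w * x + PI * x / 2) by (unfold w; field).
    replace (INR p * PI * x) with (w * x - PI * x / 2) by (unfold w; field).
    rewrite cos_plus, cos_minus. unfold w. field. }
  assert (Hcont : forall x, Rmin 0 1 <= x <= Rmax 0 1 -> continuous DF x).
  { intros x _. unfold DF. apply cR_mult. apply continuous_const.
    apply cR_plus; apply cR_mult; try apply continuous_const; apply f_cont. }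
  pose proof (is_RInt_derive F DF 0 1 Hder Hcont) as H1.
  match type of H1 with is_RInt _ _ _ ?v => replace v with 0 in H1 end.
  2:{ unfold F, GG, hh, w. rewrite !Rmult_1_r, !Rmult_0_r, Rdiv_0_l, sin_0.
    rewrite cos_half. unfold minus, plus, opp; simpl. ring. }
  assert (H2 : is_RInt DF 0 1 (PI / 2 * ((INR p + 5/4) * Ic (S p) + (1/4 - INR p) * Ic p))).
  { apply (is_RInt_scal (V := R_NormedModule)).
    apply (is_RInt_plus (V := R_NormedModule)); apply (is_RInt_scal (V := R_NormedModule));
    apply (RInt_correct (V := R_CompleteNormedModule)); apply ex_I. }
  apply (is_RInt_unique (V:=R_CompleteNormedModule)) in H1. apply (is_RInt_unique (V:=R_CompleteNormedModule)) in H2.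
  rewrite H1 in H2. pose proof PI_RGT_0.
  assert (E2 : (INR p + 5/4) * Ic (S p) + (1/4 - INR p) * Ic p = 0).
  { apply (Rmult_eq_reg_l (PI / 2)). rewrite <- H2. ring. lra. }
  lra.
Qed.

Lemma hh_pos x : 0 < x < 1 -> 0 < hh x.
Proof.
  intros Hx. unfold hh. apply sqrt_lt_R0. pose proof PI_RGT_0. apply sin_gt_0; nra.
Qed.

Lemma hh_le1 x : hh x <= 1.
Proof. unfold hh. rewrite <- sqrt_1. apply sqrt_le_1_alt. apply SIN_bound. Qed.

Lemma I0_pos : 0 < Ic 0.
Proof.
  unfold Ic. apply RInt_gt_0. lra.
  - intros x Hx. simpl INR. rewrite !Rmult_0_l, cos_0, Rmult_1_r. apply hh_pos; auto.
  - intros x _. apply f_cont.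
Qed.

Lemma I0_le1 : Ic 0 <= 1.
Proof.
  unfold Ic. apply Rle_trans with (RInt (fun _ => 1) 0 1).
  - apply RInt_le. lra. apply ex_I. apply ex_RInt_const.
    intros x Hx. simpl INR. rewrite !Rmult_0_l, cos_0, Rmult_1_r. apply hh_le1.
  - rewrite RInt_const. unfold scal; simpl; unfold mult; simpl. lra.
Qed.

Lemma I1_eq : Ic 1 = - Ic 0 / 5.
Proof. pose proof (Irec 0). simpl INR in H. lra. Qed.

Lemma Ineg m : (1 <= m)%nat -> Ic m < 0.
Proof.
  induction m as [|p IH]; intros Hm. lia.
  destruct (Nat.eq_dec p 0) as [->|Hp].
  - rewrite I1_eq. pose proof I0_pos. lra.
  - assert (Hlt := IH ltac:(lia)). pose proof (Irec p).
    assert (Hp1 : 1 <= INR p) by (apply (le_INR 1); lia).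
    assert (E : Ic (S p) = (INR p - 1/4) / (INR p + 5/4) * Ic p) by (apply (Rmult_eq_reg_l (INR p + 5/4)); [rewrite H; field | ]; lra).
    rewrite E. assert (0 < (INR p - 1/4)/(INR p + 5/4)) by (apply Rdiv_lt_0_compat; lra). nra.
Qed.

Lemma Iinc p : (1 <= p)%nat -> Ic p < Ic (S p).
Proof.
  intros Hp. pose proof (Irec p). pose proof (Ineg p Hp). pose proof (pos_INR p).
  apply (Rmult_lt_reg_l (INR p + 5/4)). lra. lra.
Qed.

Lemma Imono a b : (1 <= a)%nat -> (a < b)%nat -> Ic a < Ic b.
Proof.
  intros Ha. induction b as [|b IH]; intros Hab. lia.
  destruct (Nat.eq_dec a b) as [->|Hne]. apply Iinc; auto.
  apply Rlt_trans with (Ic b). apply IH; lia. apply Iinc; lia.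
Qed.

Lemma Psum N : Ic 0 + 2 * gs Ic 1 N = (1 - 4 * INR N) * Ic N.
Proof.
  induction N as [|N IH].
  - simpl. ring.
  - simpl gs. pose proof (Irec N). rewrite S_INR. simpl (1 + N)%nat.
    lra.
Qed.

Lemma Rpow32 : Rpower 2 (3/2) = 2 * sqrt 2.
Proof.
  replace (3/2) with (1 + /2) by field. rewrite Rpower_plus, Rpower_1, Rpower_sqrt; lra.
Qed.

Lemma Rjk_eq j k d : INR d = Rabs (INR j - INR k) -> Rjk j k = sqrt 2 * (Ic d - Ic (j + k)).
Proof.
  intros Hd. unfold Rjk. rewrite Rpow32.
  assert (H : RInt (fun x => sqrt (sin (PI * x / 2)) * sin (INR j * PI * x) * sin (INR k * PI * x)) 0 1
              = / 2 * (Ic d - Ic (j + k))).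
  { apply (is_RInt_unique (V:=R_CompleteNormedModule)).
    apply (is_RInt_ext (fun x => scal (/2) (minus (hh x * cos (INR d * PI * x)) (hh x * cos (INR (j + k) * PI * x))))).
    - intros x _. unfold scal, minus, plus, opp, mult; simpl. unfold hh.
      rewrite (Rmult_assoc (sqrt (sin (PI * x / 2))) (sin _)), (prod_sin j k d x Hd). unfold mult; simpl. field.
    - apply (is_RInt_scal (V := R_NormedModule)).
      apply (is_RInt_minus (V := R_NormedModule));
      apply (RInt_correct (V := R_CompleteNormedModule)); apply ex_I. }
  rewrite H. field.
Qed.

Lemma Ibounds m : - (1/5) <= Ic m <= 1.
Proof.
  pose proof I0_pos. pose proof I0_le1. pose proof I1_eq.
  destruct m as [|m]. lra.
  destruct m as [|m]. lra.
  pose proof (Imono 1 (S (S m)) ltac:(lia) ltac:(lia)). pose proof (Ineg (S (S m)) ltac:(lia)). lra.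
Qed.

Lemma part_i j k : (1 <= j)%nat -> (1 <= k)%nat ->
  0 < Rjk j j /\ (j <> k -> Rjk j k < 0) /\ Rabs (Rjk j k) <= 2 * sqrt 2.
Proof.
  intros Hj Hk. pose proof (sqrt_lt_R0 2 ltac:(lra)) as Hs2.
  split; [| split].
  - assert (Hd : INR 0 = Rabs (INR j - INR j)) by (rewrite Rminus_diag, Rabs_R0; reflexivity).
    rewrite (Rjk_eq j j 0 Hd). pose proof I0_pos. pose proof (Ineg (j + j) ltac:(lia)).
    apply Rmult_lt_0_compat; lra.
  - intros Hne. rewrite (Rjk_eq j k (dist j k) (dist_INR j k)).
    pose proof (Imono (dist j k) (j + k) (dist_pos j k Hne) (dist_lt j k Hj Hk)).
    assert (0 < - (Ic (dist j k) - Ic (j + k))) by lra.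
    assert (0 < sqrt 2 * - (Ic (dist j k) - Ic (j + k))) by (apply Rmult_lt_0_compat; lra).
    lra.
  - rewrite (Rjk_eq j k (dist j k) (dist_INR j k)).
    rewrite Rabs_mult, (Rabs_right (sqrt 2)) by lra.
    pose proof (Ibounds (dist j k)). pose proof (Ibounds (j + k)).
    rewrite (Rmult_comm 2). apply Rmult_le_compat_l. lra.
    apply Rabs_le. lra.
Qed.

Lemma part_ii n : (2 <= n)%nat -> Rjk (S n) n < Rjk n (n - 1).
Proof.
  intros Hn.
  assert (H1 : INR 1 = Rabs (INR (S n) - INR n)).
  { rewrite (S_INR n). replace (INR n + 1 - INR n) with 1 by ring. rewrite Rabs_R1. reflexivity. }
  assert (H2 : INR 1 = Rabs (INR n - INR (n - 1))).
  { rewrite minus_INR by lia. replace (INR n - (INR n - INR 1)) with (INR 1) by ring.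
    change (INR 1) with 1. rewrite Rabs_R1. reflexivity. }
  rewrite (Rjk_eq _ _ 1 H1), (Rjk_eq _ _ 1 H2).
  pose proof (Imono (n + (n - 1)) (S n + n) ltac:(lia) ltac:(lia)).
  pose proof (sqrt_lt_R0 2 ltac:(lra)).
  apply Rmult_lt_compat_l; lra.
Qed.

Lemma sum_rev f N : sum_f_R0 (fun i => f (N - i)%nat) N = sum_f_R0 f N.
Proof.
  induction N as [|N IH].
  - reflexivity.
  - rewrite decomp_sum by lia. simpl pred. simpl (S N - 0)%nat.
    change (sum_f_R0 (fun i => f (S N - S i)%nat) N) with (sum_f_R0 (fun i => f (N - i)%nat) N).
    rewrite IH. simpl. ring.
Qed.

Lemma sum_lin c f g N : sum_f_R0 (fun i => c * (f i - g i)) N = c * (sum_f_R0 f N - sum_f_R0 g N).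
Proof. induction N as [|N IH]; simpl; [ring | rewrite IH; ring]. Qed.

Lemma sum_gs f N : sum_f_R0 f N = gs f 0 (S N).
Proof. induction N as [|N IH]; simpl; [ring | rewrite IH; simpl; ring]. Qed.

Lemma gs_shift f a L : gs f (S a) L = gs (fun i => f (S i)) a L.
Proof. induction L as [|L IH]; simpl; [reflexivity | rewrite IH; reflexivity]. Qed.

Lemma sum_neg f N : (forall i, f i < 0) -> sum_f_R0 f N <= 0.
Proof. intros H. induction N as [|N IH]; simpl; [pose proof (H 0%nat) | pose proof (H (S N))]; lra. Qed.

Lemma part_iii n : (2 <= n)%nat -> 2 * sum_f_R0 (fun i => Rjk (S i) n) (n - 2) >= - Rjk n n.
Proof.
  intros Hn. set (N := (n - 2)%nat).
  assert (S1 : sum_f_R0 (fun i => Rjk (S i) n) N =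
               sqrt 2 * (sum_f_R0 (fun i => Ic (S (N - i))) N - sum_f_R0 (fun i => Ic (S i + n)) N)).
  { rewrite <- sum_lin. apply sum_eq. intros i Hi.
    assert (Hd : INR (S (N - i)) = Rabs (INR (S i) - INR n)).
    { rewrite Rabs_minus_sym. replace (S (N - i)) with (n - S i)%nat by (unfold N; lia).
      rewrite minus_INR by (unfold N in Hi; lia).
      rewrite Rabs_right. reflexivity. assert (INR (S i) <= INR n) by (apply le_INR; unfold N in Hi; lia). lra. }
    apply Rjk_eq. exact Hd. }
  rewrite (sum_rev (fun i => Ic (S i)) N) in S1.
  assert (S3 : 0 < Ic 0 + 2 * sum_f_R0 (fun i => Ic (S i)) N).
  { rewrite sum_gs, <- gs_shift, Psum. pose proof (Ineg (S N) ltac:(lia)).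
    pose proof (pos_INR (S N)). rewrite S_INR in *. pose proof (pos_INR N). replace ((1 - 4 * (INR N + 1)) * Ic (S N)) with ((-(1 - 4*(INR N+1))) * (- Ic (S N))) by ring. apply Rmult_lt_0_compat; lra. }
  assert (S4 : sum_f_R0 (fun i => Ic (S i + n)) N <= 0).
  { apply sum_neg. intros i. apply Ineg. lia. }
  assert (Hd : INR 0 = Rabs (INR n - INR n)) by (rewrite Rminus_diag, Rabs_R0; reflexivity).
  rewrite S1, (Rjk_eq n n 0 Hd).
  pose proof (Ineg (n + n) ltac:(lia)).
  pose proof (sqrt_lt_R0 2 ltac:(lra)).
  set (A := sum_f_R0 (fun i => Ic (S i)) N) in *.
  set (Bs := sum_f_R0 (fun i => Ic (S i + n)) N) in *.
  apply Rle_ge. apply Rminus_le.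
  replace (- (sqrt 2 * (Ic 0 - Ic (n + n))) - 2 * (sqrt 2 * (A - Bs)))
    with (- (sqrt 2 * (Ic 0 + 2 * A - 2 * Bs - Ic (n + n)))) by ring.
  assert (0 <= sqrt 2 * (Ic 0 + 2 * A - 2 * Bs - Ic (n + n))) by (apply Rmult_le_pos; lra).
  lra.
Qed.

Theorem lemma3p6 :
  forall n : nat, (2 <= n)%nat ->
  (forall j k : nat, (1 <= j <= n)%nat -> (1 <= k <= n)%nat ->
     (* (i) *)
     (0 < Rjk j j /\ (j <> k -> Rjk j k < 0) /\ Rabs (Rjk j k) <= 2 * sqrt 2) /\
     (* (iv) *)
     (/ PI * ln ((INR j + INR k + 1/2) / (Rabs (INR j - INR k) + 1/2)) < Sjk j k /\
      0 < / PI * ln ((INR j + INR k + 1/2) / (Rabs (INR j - INR k) + 1/2))) /\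
     (* (v) *)
     ((j <> k -> Sjk j k < / PI * ln ((INR j + INR k - 1/2) / (Rabs (INR j - INR k) - 1/2))) /\
      Sjk j j < 2 / PI + / PI * ln (4 * INR j - 1))) /\
  (* (ii) R_{n,n-1} decreasing in n >= 2 *)
  Rjk (S n) n < Rjk n (n - 1) /\
  (* (iii) 2 * sum_{k=1}^{n-1} R_{kn} >= - R_{nn} *)
  2 * sum_f_R0 (fun i => Rjk (S i) n) (n - 2) >= - Rjk n n /\
  (* (vi) S_{jn} increasing in j, 1 <= j <= n *)
  (forall j : nat, (1 <= j)%nat -> (j < n)%nat -> Sjk j n < Sjk (S j) n).
Proof.
  intros n Hn. split; [| split; [| split]].
  - intros j k [Hj _] [Hk _]. split; [| split; [| split]].
    + apply part_i; auto.
    + apply S_iv; auto.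
    + intros Hne. apply S_v1; auto.
    + apply S_v2; auto.
  - apply part_ii; auto.
  - apply part_iii; auto.
  - intros j Hj Hjn. apply S_vi; auto.
Qed.
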